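(* Let $\mathcal C:\{0,1\}^+\to\{0,1\}^+$ be a compressor, let $n\ge 1$ be known, and let $S\in\{0,1\}^n$ be an unknown binary string of length $n$ that can only be accessed through a substring oracle. Then there is an (adaptive) algorithm that reconstructs $S$ using $O(|\mathcal C(S)|)$ substring queries to the oracle.
   Context: A compressor is an injective computable function $\mathcal C:\{0,1\}^+\to\{0,1\}^+$ whose inverse $\mathcal C^{-1}$ (the decompressor, with $\mathcal C^{-1}(\mathcal C(S))=S$) is also computable; $|\mathcal C(S)|$ denotes the length in bits of $\mathcal C(S)$. A substring oracle knows the hidden string $S$ and answers queries of the form ''Is $s$ a substring of $S$?'' with yes/no. An adaptive algorithm may choose each query depending on the answers to previous queries. Reconstructing $S$ means determining $S$ exactly. No bound on running time is claimed. *)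

(* Defs.v *)
From mathcomp Require Import all_boot.
Set Implicit Arguments. Unset Strict Implicit. Unset Printing Implicit Defensive.

(* Binary strings are [seq bool]; "s is a substring of S" is [infix s S]
   (contiguous occurrence), as in mathcomp's seq.v. *)

(* A compressor: an injective function on nonempty binary strings into
   nonempty binary strings, with a decompressor inverting it.  Both are
   Rocq functions, hence computable. *)
Definition compressor (C D : seq bool -> seq bool) : Prop :=
  (forall s, 0 < size s -> 0 < size (C s)) /\
  (forall s, 0 < size s -> D (C s) = s).

(* An adaptive substring-query algorithm (for a fixed input length) is a
   finite decision tree: at an internal node it asks "is q a substring of S?"
   and branches on the answer; at a leaf it outputs its guess for S. *)
Inductive qtree : Type :=
  | Leaf of seq bool
  | Query of seq bool & qtree & qtree.

Fixpoint run (t : qtree) (S : seq bool) : seq bool :=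
  match t with
  | Leaf s => s
  | Query q ty tn => if infix q S then run ty S else run tn S
  end.

Fixpoint nqueries (t : qtree) (S : seq bool) : nat :=
  match t with
  | Leaf _ => 0
  | Query q ty tn => (if infix q S then nqueries ty S else nqueries tn S).+1
  end.

(* Main.v *)
Require Import Defs.
From mathcomp Require Import all_boot zify.
Set Implicit Arguments. Unset Strict Implicit. Unset Printing Implicit Defensive.

Fixpoint allstr (n : nat) : seq (seq bool) :=
  if n is m.+1 then [seq b :: s | b <- [:: false; true], s <- allstr m] else [:: [::]].

Lemma size_allstr n : size (allstr n) = 2 ^ n.
Proof. elim: n => [|n IH] //=; rewrite size_cat !size_map cats0 size_map IH expnS; lia. Qed.

Lemma mem_allstr s : s \in allstr (size s).
Proof.
elim: s => [|b s IH] //=; rewrite cats0 mem_cat.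
have inj b' : injective (cons b' : seq bool -> seq bool) by move=> x y [].
by case: b; rewrite (mem_map (inj _)) IH ?orbT.
Qed.

Lemma allstr_size n s : s \in allstr n -> size s = n.
Proof.
elim: n s => [|n IH] s /=; first by rewrite inE => /eqP->.
rewrite cats0 mem_cat => /orP[] /mapP [t /IH <- ->] //.
Qed.

Fixpoint cands (m : nat) : seq (seq bool) :=
  if m is m'.+1 then allstr m ++ cands m' else allstr 0.

Lemma size_cands m : size (cands m) < 2 ^ m.+1.
Proof.
elim: m => [|m IH] //; rewrite -[cands m.+1]/(allstr m.+1 ++ cands m) size_cat size_allstr.
move: IH; rewrite !expnS; lia.
Qed.

Lemma mem_cands m s : size s <= m -> s \in cands m.
Proof.
elim: m => [|m IH].
  by rewrite leqn0 => /nilP ->.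
rewrite -[cands m.+1]/(allstr m.+1 ++ cands m) mem_cat leq_eqVlt => /orP[/eqP <-|/IH ->]; last by rewrite orbT.
by rewrite mem_allstr.
Qed.

Lemma infix_same (T S : seq bool) : size T = size S -> infix T S = (T == S).
Proof.
move=> hs; apply/idP/eqP => [/infixP [a [b E]]|->]; last exact: infix_refl.
move: (f_equal size E); rewrite !size_cat hs.
case: a E => [|x a]; case: b => [|y b] //= E; rewrite ?cats0 //= => h; try lia; by rewrite E cats0.
Qed.

Definition cnt (K : seq (seq bool)) q := count (infix q) K.
Definition balanced (K : seq (seq bool)) q :=
  (6 * cnt K q <= 5 * size K) && (6 * (size K - cnt K q) <= 5 * size K).

Lemma infix_ext (q T : seq bool) : infix q T ->
  [|| infix (rcons q false) T, infix (rcons q true) T,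
      infix (false :: q) T, infix (true :: q) T | T == q].
Proof.
move=> /infixP [a [b ->]].
case: b => [|x b].
  case/lastP: a => [|a y]; first by rewrite cats0 eqxx !orbT.
  have -> : rcons a y ++ q ++ [::] = a ++ (y :: q) ++ [::] by rewrite cat_rcons.
  by case: y; rewrite infix_infix !orbT.
have -> : a ++ q ++ x :: b = a ++ (rcons q x) ++ b by rewrite -cats1 -!catA.
by case: x; rewrite infix_infix ?orbT.
Qed.

Lemma count_le5 (p p1 p2 p3 p4 p5 : pred (seq bool)) s :
  (forall x, p x -> [|| p1 x, p2 x, p3 x, p4 x | p5 x]) ->
  count p s <= count p1 s + count p2 s + count p3 s + count p4 s + count p5 s.
Proof.
move=> H; elim: s => [|x s IH] //=.
move: (H x); case: (p x); case: (p1 x); case: (p2 x); case: (p3 x);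
  case: (p4 x); case: (p5 x) => //= h; try (have := h isT); lia.
Qed.

Lemma cnt_bound (K : seq (seq bool)) q : uniq K ->
  cnt K q <= cnt K (rcons q false) + cnt K (rcons q true) + cnt K (false :: q)
             + cnt K (true :: q) + 1.
Proof.
move=> uK; rewrite /cnt.
apply: leq_trans (count_le5 (p5 := pred1 q) _ (@infix_ext q)) _.
by rewrite leq_add2l count_uniq_mem //; case: (q \in K).
Qed.

Lemma infix_size_le (q T : seq bool) : infix q T -> size q <= size T.
Proof. by move=> /infixP [a [b ->]]; rewrite !size_cat; lia. Qed.

Lemma cnt_pos_size n (K : seq (seq bool)) q : {in K, forall T, size T = n} -> 0 < cnt K q -> size q <= n.
Proof.
move=> hK; rewrite /cnt -has_count => /hasP [T TK /infix_size_le].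
by rewrite (hK T TK).
Qed.

Lemma ex_bal n (K : seq (seq bool)) : uniq K -> {in K, forall T, size T = n} -> 2 <= size K ->
  forall d q, n.+1 - size q <= d -> 5 * size K < 6 * cnt K q ->
  exists q', (size q' <= n) && balanced K q'.
Proof.
move=> uK hK K2; elim=> [|d IH] q hd hbig.
  have : 0 < cnt K q by lia.
  move=> /(cnt_pos_size hK); lia.
have qn : size q <= n by apply: (cnt_pos_size hK); lia.
have step e : size e = (size q).+1 ->
   (exists q', (size q' <= n) && balanced K q') \/ 6 * cnt K e < size K.
  move=> se.
  case: (ltnP (5 * size K) (6 * cnt K e)) => hb.
    left; apply: (IH e) => //; lia.
  case hbal: (balanced K e).
    left; exists e; rewrite hbal andbT.
    move: hbal; rewrite /balanced => /andP [_ h2].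
    apply: (cnt_pos_size hK); lia.
  right; move: hbal; rewrite /balanced hb /= => /negbT; rewrite -ltnNge.
  have := count_size (infix e) K; rewrite /cnt; lia.
have := cnt_bound q uK.
have [//|h1] := step (rcons q false) (size_rcons _ _).
have [//|h2] := step (rcons q true) (size_rcons _ _).
have [//|h3] := step (false :: q) erefl.
have [//|h4] := step (true :: q) erefl.
lia.
Qed.

Definition pickq n K := nth [::] (cands n) (find (balanced K) (cands n)).

Lemma pick_bal n (K : seq (seq bool)) : uniq K -> {in K, forall T, size T = n} -> 2 <= size K ->
  balanced K (pickq n K).
Proof.
move=> uK hK K2; rewrite /pickq; apply: nth_find.
have [q' /andP [sq bq]] : exists q', (size q' <= n) && balanced K q'.
  apply: (ex_bal uK hK K2 (d := n.+1) (q := [::])) => //.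
  rewrite /cnt (eq_count (a2 := predT)); last by move=> x; rewrite infix0s.
  rewrite count_predT; by rewrite ltn_mul2r (leq_trans _ K2).
by apply/hasP; exists q' => //; apply: mem_cands.
Qed.

Definition memK (S : seq bool) (K : seq (seq bool)) : bool := S \in K.

Definition tests (K : seq (seq bool)) (k : qtree) : qtree :=
  foldr (fun T acc => Query T (Leaf T) acc) k K.

Lemma tests_spec n (K : seq (seq bool)) k S : size S = n -> {in K, forall T, size T = n} ->
  run (tests K k) S = (if memK S K then S else run k S) /\
  nqueries (tests K k) S <= size K + (if memK S K then 0 else nqueries k S).
Proof.
move=> hS; elim: K => [|T K IH] hK //=.
have hK' : {in K, forall T, size T = n} by move=> x xK; apply: hK; rewrite inE xK orbT.
have [IH1 IH2] := IH hK'.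
have sT : size T = n by apply: hK; rewrite inE eqxx.
rewrite infix_same; last by rewrite sT hS.
rewrite /memK in IH1 IH2 *; rewrite inE; case: (eqVneq T S) => [->|ne] /=; first by rewrite ?eqxx /=; split => //; lia.
split => //; lia.
Qed.

Fixpoint ident (n f : nat) (K : seq (seq bool)) (k : qtree) : qtree :=
  match f with
  | 0 => tests K k
  | f'.+1 => if size K <= 1 then tests K k else
      let q := pickq n K in
      Query q (ident n f' (filter (infix q) K) k)
              (ident n f' (filter (predC (infix q)) K) k)
  end.

Lemma shrink a N x y : 6 * a <= 5 * N -> N * (5 * x) <= 6 * y -> a * x <= y.
Proof. move=> h1 h2; nia. Qed.

Lemma ident_spec n f (K : seq (seq bool)) k S c : size S = n ->
  {in K, forall T, size T = n} -> uniq K -> size K <= f.+1 -> size K * 5 ^ c <= 6 ^ c ->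
  run (ident n f K k) S = (if memK S K then S else run k S) /\
  nqueries (ident n f K k) S <= c.+1 + (if memK S K then 0 else nqueries k S).
Proof.
move=> hS; elim: f K c => [|f IH] K c hK uK sK hc.
  have [h1 h2] := tests_spec k hS hK; split => //; apply: leq_trans h2 _; lia.
rewrite /=; case: ifP => [s1|/negbT s2].
  have [h1 h2] := tests_spec k hS hK; split => //; apply: leq_trans h2 _; lia.
rewrite -ltnNge in s2.
case: c hc => [|c] hc; first by move: hc; rewrite !expn0; lia.
have hb := pick_bal uK hK s2; move: hb; rewrite /balanced /cnt => /andP [b1 b2].
set q := pickq n K in b1 b2 *.
have e1 : size (filter (infix q) K) = count (infix q) K by rewrite size_filter.
have e2 : size (filter (predC (infix q)) K) = size K - count (infix q) K.
  by rewrite size_filter -(count_predC (infix q) K); lia.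
have hK1 : {in filter (infix q) K, forall T, size T = n}.
  by move=> x; rewrite mem_filter => /andP [_ /hK].
have hK2 : {in filter (predC (infix q)) K, forall T, size T = n}.
  by move=> x; rewrite mem_filter => /andP [_ /hK].
have hc' : size K * (5 * 5 ^ c) <= 6 * 6 ^ c by rewrite -!expnS.
have sK1 : size (filter (infix q) K) <= f.+1 by rewrite e1; lia.
have sK2 : size (filter (predC (infix q)) K) <= f.+1 by rewrite e2; lia.
rewrite /=; case hq: (infix q S).
  have [r1 r2] := IH _ c hK1 (filter_uniq _ uK) sK1
     ltac:(rewrite e1; exact: (shrink b1 hc')).
  rewrite /memK mem_filter hq /= in r1 r2; rewrite /memK; split => //; lia.
have [r1 r2] := IH _ c hK2 (filter_uniq _ uK) sK2
   ltac:(rewrite e2; exact: (shrink b2 hc')).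
rewrite /memK mem_filter /= hq /= in r1 r2; rewrite /memK; split => //; lia.
Qed.

Definition Kset (C : seq bool -> seq bool) n j : seq (seq bool) :=
  undup [seq T <- allstr n | size (C T) <= 2 ^ j].

Fixpoint levels (C : seq bool -> seq bool) n j f : qtree :=
  match f with
  | 0 => ident n (size (Kset C n j)) (Kset C n j) (Leaf [::])
  | f'.+1 => ident n (size (Kset C n j)) (Kset C n j) (levels C n j.+1 f')
  end.

Lemma Kset_size C D n j : compressor C D -> 0 < n ->
  size (Kset C n j) * 5 ^ (4 * (2 ^ j).+1) <= 6 ^ (4 * (2 ^ j).+1).
Proof.
move=> [_ hD] n0.
have hsz : size (Kset C n j) < 2 ^ (2 ^ j).+1.
  rewrite -(size_map C); apply: leq_trans (size_cands (2 ^ j)).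
  apply: uniq_leq_size.
    rewrite map_inj_in_uniq ?undup_uniq //.
    move=> x y; rewrite !mem_undup !mem_filter => /andP [_ /allstr_size hx]
      /andP [_ /allstr_size hy] e.
    by rewrite -(hD x) ?hx // -(hD y) ?hy // e.
  move=> z /mapP [x]; rewrite mem_undup mem_filter => /andP [h _] ->.
  exact: mem_cands.
set m := (2 ^ j).+1 in hsz *.
apply: leq_trans (_ : 2 ^ m * 5 ^ (4 * m) <= _).
  by rewrite leq_mul2r ltnW ?orbT.
by rewrite !expnM -expnMn leq_exp2r.
Qed.

Lemma levels_spec C D n S : compressor C D -> 0 < n -> size S = n ->
  forall f j k, j <= k -> size (C S) <= 2 ^ k -> k <= j + f ->
  run (levels C n j f) S = S /\
  nqueries (levels C n j f) S <= 4 * (2 ^ k.+1 - 2 ^ j) + 10 * (k.+1 - j).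
Proof.
move=> hC n0 hS; elim=> [|f IH] j k jk hk kf.
all: set K := Kset C n j.
all: have hK : {in K, forall T, size T = n} by
       move=> x; rewrite mem_undup mem_filter => /andP [_ /allstr_size].
all: have uK : uniq K by rewrite undup_uniq.
all: have hsz := Kset_size j hC n0.
all: have memS : memK S K = (size (C S) <= 2 ^ j) by
       rewrite /memK mem_undup mem_filter -hS mem_allstr andbT.
all: have e2 : 2 ^ j <= 2 ^ k by rewrite leq_exp2l.
all: have e3 : 2 ^ k.+1 = 2 * 2 ^ k by rewrite expnS.
- have [r1 r2] := ident_spec (Leaf [::]) hS hK uK (leqnSn _) hsz.
  have jk' : k = j by lia.
  rewrite jk' in hk; rewrite memS hk in r1 r2; split => //.
  apply: leq_trans r2 _; lia.
- have [r1 r2] := ident_spec (levels C n j.+1 f) hS hK uK (leqnSn _) hsz.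
  rewrite /= -/K; case hm: (size (C S) <= 2 ^ j); rewrite memS hm in r1 r2.
    split => //; apply: leq_trans r2 _; lia.
  have jk' : j < k.
    rewrite ltn_neqAle jk andbT; apply/eqP => ejk; move: hm; rewrite ejk hk //.
  have [i1 i2] := IH j.+1 k jk' hk ltac:(lia).
  have e4 : 2 ^ j.+1 <= 2 ^ k by rewrite leq_exp2l.
  rewrite expnS in e4.
  split; first by rewrite r1.
  rewrite e3 expnS in i2; apply: leq_trans r2 _; rewrite e3; lia.
Qed.

Lemma le_foldr_max (f : seq bool -> nat) (s : seq (seq bool)) x :
  x \in s -> f x <= foldr maxn 0 (map f s).
Proof.
elim: s => [|y s IH] //=; rewrite inE => /orP [/eqP ->|/IH h]; first by rewrite leq_maxl.
by rewrite (leq_trans h) // leq_maxr.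
Qed.

Theorem lemma2 (C D : seq bool -> seq bool) (hC : compressor C D) :
  exists c : nat, exists A : nat -> qtree,
    forall n : nat, 0 < n ->
    forall S : seq bool, size S = n ->
      run (A n) S = S /\ nqueries (A n) S <= c * size (C S).
Proof.
exists 36, (fun n => levels C n 0 (foldr maxn 0 (map (fun T => size (C T)) (allstr n)))).
move=> n n0 S hS.
set J := foldr maxn 0 _.
set L := size (C S).
have L0 : 0 < L by apply: hC.1; rewrite hS.
have LJ : L <= J by apply: (le_foldr_max (fun T => size (C T))); rewrite -hS mem_allstr.
set k := up_log 2 L.
have Lk : L <= 2 ^ k by apply: up_logP.
have kJ : k <= J by apply: up_log_min => //; apply: leq_trans LJ (ltnW (ltn_expl _ _)).
have [r1 r2] := levels_spec hC n0 hS (f := J) (j := 0) (k := k) isT Lk kJ.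
split => //; apply: leq_trans r2 _.
have kk : k < 2 ^ k by apply: ltn_expl.
have k2 : 2 ^ k < 2 * L.
  case: (ltnP 1 L) => L1.
    have := up_log_gtn (p := 2) isT L1; rewrite -/k.
    have : 0 < k by rewrite /k up_log_gt0 L1.
    case: k {Lk kJ kk} => [|k'] //= _; rewrite expnS; lia.
  have L1' : L = 1 by lia.
  by rewrite /k L1' up_log1.
rewrite expnS expn0; lia.
Qed.
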